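(* Let $G$ be a digraph and let $\alpha^{(n+1)}>\gamma^{(n)}>\beta^{(n-1)}$ be allowed elementary paths on $G$ (of lengths $n+1,n,n-1$) which all have the same starting vertex and all have the same end vertex. Write $\alpha=v_0v_1\cdots v_{n+1}$. Then either (a) there exists an allowed elementary $n$-path $\gamma'\neq\gamma$ with $\alpha>\gamma'>\beta$; or (b) $\beta$ is obtained from $\alpha$ by removing two subsequent vertices $v_i\to v_{i+1}$ with $1\le i\le n-1$.
   Context: A digraph $G=(V,E)$ consists of a set $V$ and $E\subseteq(V\times V)\setminus\{(v,v)\}$; $(u,v)\in E$ is written $u\to v$. An allowed elementary $n$-path is a sequence $v_0\cdots v_n$ of vertices with $v_{i-1}\to v_i\in E$ for $1\le i\le n$. For allowed elementary paths, $\gamma'<\gamma$ (equivalently $\gamma>\gamma'$) means $\gamma'$ is obtained from $\gamma$ by deleting some of its entries. *)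

(* Defs.v *)
From mathcomp Require Import all_boot.
Set Implicit Arguments. Unset Strict Implicit. Unset Printing Implicit Defensive.

(* A digraph is given by a vertex type V and an edge relation E : V -> V -> Prop
   (E u v means u -> v); irreflexivity of E is a hypothesis of the theorem. *)

Fixpoint chain (V : Type) (E : V -> V -> Prop) (x : V) (s : seq V) : Prop :=
  match s with
  | [::] => True
  | y :: s' => E x y /\ chain E y s'
  end.

(* allowed elementary n-path v_0 v_1 ... v_n, represented as the sequence
   of its n+1 vertices *)
Definition allowed_path (V : Type) (E : V -> V -> Prop) (n : nat) (p : seq V) : Prop :=
  match p with
  | [::] => False
  | x :: s => size s = n /\ chain E x s
  end.

(* Main.v *)
Require Import Defs.
From mathcomp Require Import all_boot zify.
Set Implicit Arguments. Unset Strict Implicit. Unset Printing Implicit Defensive.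

Section S.
Variables (V : eqType) (E : V -> V -> Prop) (x0 : V).

Lemma chain_nth x s : chain E x s <->
  (forall i, i < size s -> E (nth x0 (x::s) i) (nth x0 (x::s) i.+1)).
Proof.
elim: s x => [|y s IH] x /=.
  by split => // _ i; rewrite ltn0.
split.
  by move=> [Hxy Hc] [|i] //= Hi; apply: (IH y).1.
move=> H; split; first exact: (H 0 erefl).
by apply/IH => i Hi; exact: (H i.+1 Hi).
Qed.

Lemma allowedP n p : allowed_path E n p <->
  size p = n.+1 /\ forall i, i < n -> E (nth x0 p i) (nth x0 p i.+1).
Proof.
case: p => [|x s] /=; first by split => [[]|[]].
split => [[<- /chain_nth H]|[[<-] H]]; first by split.
by split => //; apply/chain_nth.
Qed.

Definition rm k (s : seq V) := take k s ++ drop k.+1 s.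

Lemma subseq_rm s2 s1 : subseq s1 s2 -> size s1 = (size s2).-1 -> 0 < size s2 ->
  exists2 k, k < size s2 & s1 = rm k s2.
Proof.
elim: s2 s1 => [|x s2 IH] s1 //= Hsub Hsz _.
case: s1 Hsub Hsz => [|y s1] /=.
  by move=> _ /esym/size0nil ->; exists 0.
case: eqP => [->|Hne] Hsub Hsz.
  have h1 : size s1 = (size s2).-1 by rewrite -Hsz.
  have h2 : 0 < size s2 by rewrite -Hsz.
  have [k Hk ->] := IH s1 Hsub h1 h2.
  by exists k.+1.
exists 0 => //; rewrite /rm /= drop0.
have := size_subseq_leqif Hsub; case => _; rewrite /= Hsz eqxx.
by move=> /esym/eqP.
Qed.

Lemma nth_rm k s i : k < size s ->
  nth x0 (rm k s) i = nth x0 s (if i < k then i else i.+1).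
Proof.
move=> Hk; rewrite /rm nth_cat size_takel; last exact: ltnW.
case: ifP => Hi; first by rewrite nth_take.
rewrite nth_drop; congr nth; move/negbT: Hi; lia.
Qed.

Lemma size_rm k s : k < size s -> size (rm k s) = (size s).-1.
Proof. move=> Hk; rewrite /rm size_cat size_takel ?size_drop; lia. Qed.

Lemma rm_subseq k s : subseq (rm k s) s.
Proof.
rewrite /rm -{3}(cat_take_drop k s); apply: cat_subseq => //.
rewrite -addn1 addnC -drop_drop; exact: drop_subseq.
Qed.
End S.
Lemma Eidx (V : Type) (E : V -> V -> Prop) x0 (s : seq V) p q p' q' :
  p = p' -> q = q' -> E (nth x0 s p) (nth x0 s q) -> E (nth x0 s p') (nth x0 s q').
Proof. by move=> -> ->. Qed.

Ltac splitifs := repeat match goal with |- context [if ?b then _ else _] =>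
  match b with context [if _ then _ else _] => fail 1
  | _ => let H := fresh "H" in case: (boolP b) => H /= end end.

Theorem lemma2p1 (V : eqType) (E : V -> V -> Prop)
  (Hirr : forall v : V, ~ E v v)
  (n : nat) (Hn : 1 <= n)
  (alpha gamma beta : seq V) (x0 : V)
  (Ha : allowed_path E n.+1 alpha)
  (Hg : allowed_path E n gamma)
  (Hb : allowed_path E n.-1 beta)
  (Hag : subseq gamma alpha) (Hgb : subseq beta gamma)
  (Hstart1 : head x0 alpha = head x0 gamma) (Hstart2 : head x0 gamma = head x0 beta)
  (Hend1 : last x0 alpha = last x0 gamma) (Hend2 : last x0 gamma = last x0 beta) :
  (exists gamma' : seq V, allowed_path E n gamma' /\ gamma' <> gamma /\
       subseq gamma' alpha /\ subseq beta gamma')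
  \/
  (exists i : nat, 1 <= i <= n.-1 /\ beta = take i alpha ++ drop i.+2 alpha).
Proof.
case: n Hn Ha Hg Hb => // n _ Ha Hg Hb.
move/(allowedP _ x0): Ha => [sa Ea].
move/(allowedP _ x0): Hg => [sg Eg].
move/(allowedP _ x0): Hb => [sb Eb]; rewrite /= in sb Eb.
have h1 : size gamma = (size alpha).-1 by rewrite sa sg.
have h2 : 0 < size alpha by rewrite sa.
have [k Hk Hgk] := subseq_rm Hag h1 h2.
have h3 : size beta = (size gamma).-1 by rewrite sb sg.
have h4 : 0 < size gamma by rewrite sg.
have [j Hj Hbj] := subseq_rm Hgb h3 h4.
rewrite -!nth0 in Hstart1 Hstart2.
rewrite -!nth_last sa sg sb /= in Hend1 Hend2.
rewrite sa in Hk; rewrite sg in Hj.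
have gk i : nth x0 gamma i = nth x0 alpha (if i < k then i else i.+1).
  by rewrite Hgk nth_rm // sa.
have bj i : nth x0 beta i = nth x0 gamma (if i < j then i else i.+1).
  by rewrite Hbj nth_rm // sg.
have k0 : 0 < k.
  case: k Hk Hgk gk => // _ _ gk.
  rewrite gk /= in Hstart1.
  by have := Ea 0 (ltn0Sn _); rewrite Hstart1 => /Hirr.
have kn : k <= n.+1.
  rewrite leqNgt; apply/negP => Hkn.
  have ek : k = n.+2 by lia.
  rewrite gk ek ltnSn in Hend1.
  by have := Ea n.+1 (ltnSn _); rewrite Hend1 => /Hirr.
have j0 : 0 < j.
  case: j Hj Hbj bj => // _ _ bj.
  rewrite bj /= in Hstart2.
  by have := Eg 0 (ltn0Sn _); rewrite Hstart2 => /Hirr.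
have jn : j <= n.
  rewrite leqNgt; apply/negP => Hjn.
  have ej : j = n.+1 by lia.
  rewrite bj ej ltnSn in Hend2.
  by have := Eg n (ltnSn _); rewrite Hend2 => /Hirr.
have szr m : m < n.+3 -> size (rm m alpha) = n.+2 by move=> h; rewrite size_rm ?sa.
have nr m i : m < n.+3 -> nth x0 (rm m alpha) i = nth x0 alpha (if i < m then i else i.+1).
  by move=> h; rewrite nth_rm ?sa.
have nr2 m p i : m < n.+3 -> p < n.+2 -> nth x0 (rm p (rm m alpha)) i = nth x0 (rm m alpha) (if i < p then i else i.+1).
  by move=> h h'; rewrite nth_rm ?szr.
have szr2 m p : m < n.+3 -> p < n.+2 -> size (rm p (rm m alpha)) = n.+1.
  by move=> h h'; rewrite size_rm ?szr.
have sgi : forall s, size s = n.+2 -> gamma <> s -> subseq s alpha -> beta = rm k.-1 s \/ beta = rm k s -> allowed_path E n.+1 s ->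
  (exists gamma' : seq V, allowed_path E n.+1 gamma' /\ gamma' <> gamma /\
       subseq gamma' alpha /\ subseq beta gamma').
  move=> s _ ne ss [] -> al; exists s; do !split => //; try (by move=> e; apply: ne);
  exact: rm_subseq.
have [ljk|ljk] := ltnP j k.
  have [ekj|nkj] := eqVneq k j.+1.
    right; exists j; split; first lia.
    apply: (eq_from_nth (x0:=x0)).
      rewrite sb size_cat size_takel ?size_drop ?sa; lia.
    move=> i Hi; rewrite bj gk nth_cat size_takel; last lia.
    splitifs; rewrite ?nth_drop; try (rewrite nth_take; last lia); (by exfalso; lia) || (congr nth; lia).
  have Ej2 : E (nth x0 alpha j.-1) (nth x0 alpha j.+1).
    have := Eb j.-1 ltac:(lia); rewrite !bj !gk.
    splitifs; move=> HH; (by exfalso; lia) || (apply: (Eidx _ _ HH); lia).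
  left; apply: (sgi (rm j alpha)).
  - by rewrite szr //; lia.
  - move=> e; have := gk j; rewrite {1}e nr; last lia. splitifs; try by exfalso; lia.
    by move=> e2; have := Ea j ltac:(lia); rewrite e2 => /Hirr.
  - exact: rm_subseq.
  - left; apply: (eq_from_nth (x0:=x0)).
      rewrite sb szr2; lia.
    move=> i Hi; rewrite bj gk nr2 ?nr; try lia.
    splitifs; (by exfalso; lia) || (congr nth; lia).
  - apply/(allowedP _ x0); split; first by rewrite szr //; lia.
    move=> i Hi; rewrite !nr; try lia.
    splitifs; first [ by exfalso; lia | by apply: (Eidx _ _ (Ea i _)); lia
       | by apply: (Eidx _ _ (Ea i.+1 _)); lia | by apply: (Eidx _ _ Ej2); lia ].
have [ekj|nkj] := eqVneq k j.
  right; exists k; split; first lia.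
  apply: (eq_from_nth (x0:=x0)).
    rewrite sb size_cat size_takel ?size_drop ?sa; lia.
  move=> i Hi; rewrite bj gk nth_cat size_takel; last lia.
  splitifs; rewrite ?nth_drop; try (rewrite nth_take; last lia); (by exfalso; lia) || (congr nth; lia).
have Ej2 : E (nth x0 alpha j) (nth x0 alpha j.+2).
  have := Eb j.-1 ltac:(lia); rewrite !bj !gk.
  splitifs; move=> HH; (by exfalso; lia) || (apply: (Eidx _ _ HH); lia).
left; apply: (sgi (rm j.+1 alpha)).
- by rewrite szr //; lia.
- move=> e; have := gk k; rewrite {1}e nr; last lia. splitifs; try by exfalso; lia.
  by move=> e2; have := Ea k ltac:(lia); rewrite -e2 => /Hirr.
- exact: rm_subseq.
- right; apply: (eq_from_nth (x0:=x0)).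
    rewrite sb szr2; lia.
  move=> i Hi; rewrite bj gk nr2 ?nr; try lia.
  splitifs; (by exfalso; lia) || (congr nth; lia).
- apply/(allowedP _ x0); split; first by rewrite szr //; lia.
  move=> i Hi; rewrite !nr; try lia.
  splitifs; first [ by exfalso; lia | by apply: (Eidx _ _ (Ea i _)); lia
     | by apply: (Eidx _ _ (Ea i.+1 _)); lia | by apply: (Eidx _ _ Ej2); lia ].
Qed.
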